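(* Let $M$ be a countably based semigroup in the category $\mathrm{Cu}$ which is an interpolation semigroup, and let $X$ be a finite dimensional compact metric space. Then $\mathrm{Lsc}(X,M)$ is an interpolation semigroup.
   Context: In a partially ordered abelian semigroup $M$, $a\ll b$ (compact containment) means: for every increasing sequence $(b_n)$ whose supremum exists and satisfies $b\le\sup b_n$, there is $n$ with $a\le b_n$. The category $\mathrm{Cu}$ consists of partially ordered abelian semigroups $M$ in which every increasing sequence has a supremum, every element is the supremum of a sequence $(a_n)$ with $a_n\ll a_{n+1}$, and $\ll$ and suprema of increasing sequences are compatible with addition. $M$ is countably based if there is a countable subset $B\subseteq M$ such that whenever $a'\ll a$ in $M$ there is $b\in B$ with $a'\le b\ll a$. $M$ is an interpolation semigroup if whenever $a_i\le b_j$ ($i,j=1,2$) there is $c\in M$ with $a_i\le c\le b_j$ for all $i,j$. $\mathrm{Lsc}(X,M)$ is the set of maps $f\colon X\to M$ such that $\{t\in X: a\ll f(t)\}$ is open for every $a\in M$, with pointwise addition and order. Dimension is covering dimension. *)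

(* Defs.v *)
From HB Require Import structures.
From mathcomp Require Import all_boot all_order all_algebra.
From mathcomp Require Import all_classical all_reals all_analysis.
Set Implicit Arguments. Unset Strict Implicit. Unset Printing Implicit Defensive.
Import Order.TTheory GRing.Theory Num.Theory.
Local Open Scope classical_set_scope.

Section CuDefs.
Variables (M : Type) (add : M -> M -> M) (le : M -> M -> Prop).

Definition incr_seq (b : nat -> M) : Prop := forall n, le (b n) (b n.+1).

Definition is_sup (b : nat -> M) (s : M) : Prop :=
  (forall n, le (b n) s) /\ (forall u, (forall n, le (b n) u) -> le s u).

Definition way_below (a b : M) : Prop :=
  forall (bn : nat -> M) (s : M), incr_seq bn -> is_sup bn s -> le b s ->
  exists n, le a (bn n).

Definition po_ab_semigroup : Prop :=
  [/\ (forall a, le a a),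
      (forall a b, le a b -> le b a -> a = b) &
      (forall a b c, le a b -> le b c -> le a c)] /\
  [/\ (forall a b c, add a (add b c) = add (add a b) c),
      (forall a b, add a b = add b a) &
      (forall a b c, le a b -> le (add a c) (add b c))].

Definition is_Cu : Prop :=
  [/\ po_ab_semigroup,
      (forall b, incr_seq b -> exists s, is_sup b s),
      (forall a, exists an : nat -> M,
          (forall n, way_below (an n) (an n.+1)) /\ is_sup an a),
      (forall a1 b1 a2 b2, way_below a1 b1 -> way_below a2 b2 ->
          way_below (add a1 a2) (add b1 b2)) &
      (forall (an bn : nat -> M) a b, incr_seq an -> incr_seq bn ->
          is_sup an a -> is_sup bn b ->
          is_sup (fun n => add (an n) (bn n)) (add a b))].

(* countable subset B (enumerated, possibly with gaps) *)
Definition countably_based : Prop :=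
  exists B : nat -> option M,
    forall a' a, way_below a' a ->
      exists n b, B n = Some b /\ le a' b /\ way_below b a.

Definition interpolation : Prop :=
  forall a1 a2 b1 b2, le a1 b1 -> le a1 b2 -> le a2 b1 -> le a2 b2 ->
    exists c, [/\ le a1 c, le a2 c, le c b1 & le c b2].
End CuDefs.

Definition lsc (X : topologicalType) (M : Type) (le : M -> M -> Prop)
  (f : X -> M) : Prop :=
  forall a : M, open [set t | way_below le a (f t)].

Definition lsc_interpolation (X : topologicalType) (M : Type)
  (le : M -> M -> Prop) : Prop :=
  forall f1 f2 g1 g2 : X -> M,
    lsc le f1 -> lsc le f2 -> lsc le g1 -> lsc le g2 ->
    (forall t, le (f1 t) (g1 t)) -> (forall t, le (f1 t) (g2 t)) ->
    (forall t, le (f2 t) (g1 t)) -> (forall t, le (f2 t) (g2 t)) ->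
    exists h : X -> M, lsc le h /\
      forall t, [/\ le (f1 t) (h t), le (f2 t) (h t),
                    le (h t) (g1 t) & le (h t) (g2 t)].

Definition covering_dim_le (X : topologicalType) (n : nat) : Prop :=
  forall (k : nat) (U : 'I_k -> set X),
    (forall i, open (U i)) -> (forall x, exists i, U i x) ->
    exists (m : nat) (V : 'I_m -> set X),
      [/\ (forall j, open (V j)),
          (forall x, exists j, V j x),
          (forall j, exists i, V j `<=` U i) &
          (forall x (J : {set 'I_m}), (forall j, j \in J -> V j x) ->
             (#|J| <= n.+1)%N)].

Definition finite_dimensional (X : topologicalType) : Prop :=
  exists n : nat, covering_dim_le X n.

(* Main.v *)
Require Import Defs.
From HB Require Import structures.
From mathcomp Require Import all_boot all_order all_algebra.
From mathcomp Require Import all_classical all_reals all_analysis.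
Local Open Scope classical_set_scope.
From Stdlib Require List.
Set Implicit Arguments. Unset Strict Implicit.

Definition reflP (M : Type) (le : M -> M -> Prop) := forall a, le a a.
Definition transP (M : Type) (le : M -> M -> Prop) :=
  forall a b c, le a b -> le b c -> le a c.
Definition approxP (M : Type) (le : M -> M -> Prop) :=
  forall a, exists an : nat -> M,
    (forall n, way_below le (an n) (an n.+1)) /\ is_sup le an a.

Lemma wbW (M : Type) (le : M -> M -> Prop) (refl : reflP le) a b :
  way_below le a b -> le a b.
Proof.
move=> H.
have [n Hn] := H (fun _ => b) b (fun _ => refl b)
   (conj (fun _ => refl b) (fun u Hu => Hu 0%N)) (refl b).
exact: Hn.
Qed.

Lemma le_wb (M : Type) (le : M -> M -> Prop) (trans : transP le) a b c :
  le a b -> way_below le b c -> way_below le a c.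
Proof.
move=> hab hbc bn s hi hs hcs; have [n hn] := hbc bn s hi hs hcs.
by exists n; exact: trans hab hn.
Qed.

Lemma wb_le (M : Type) (le : M -> M -> Prop) (trans : transP le) a b c :
  way_below le a b -> le b c -> way_below le a c.
Proof. by move=> hab hbc bn s hi hs hcs; exact: hab bn s hi hs (trans _ _ _ hbc hcs). Qed.

Lemma incr_mono (M : Type) (le : M -> M -> Prop) (refl : reflP le) (trans : transP le)
  (b : nat -> M) : incr_seq le b -> forall n m, (n <= m)%N -> le (b n) (b m).
Proof.
move=> hb n m /subnK <-; elim: (m - n)%N => [|k IH].
  by rewrite add0n; apply: refl.
by rewrite addSn; exact: trans IH (hb _).
Qed.

Lemma approx_wb (M : Type) (le : M -> M -> Prop) (refl : reflP le) (trans : transP le)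
  (approx : approxP le) x : exists an : nat -> M,
  [/\ (forall n, way_below le (an n) (an n.+1)), is_sup le an x,
      (forall n, way_below le (an n) x) & incr_seq le an].
Proof.
have [an [h1 h2]] := approx x; exists an; split => //.
  by move=> n; case: h2 => h2a _; exact: (wb_le trans (h1 n) (h2a n.+1)).
by move=> n; exact: (wbW refl (h1 n)).
Qed.

Lemma wb_interp (M : Type) (le : M -> M -> Prop) (refl : reflP le) (trans : transP le)
  (approx : approxP le) a x : way_below le a x ->
  exists a', way_below le a a' /\ way_below le a' x.
Proof.
move=> hax; have [an [h1 h2 h3 h4]] := approx_wb refl trans approx x.
have [n hn] := hax an x h4 h2 (refl x).
exists (an n.+1); split; last exact: h3.
have := le_wb trans hn (h1 n). exact.
Qed.

Lemma wb_dir (M : Type) (le : M -> M -> Prop) (refl : reflP le) (trans : transP le)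
  (approx : approxP le) u u' x : way_below le u x -> way_below le u' x ->
  exists w, [/\ le u w, le u' w & way_below le w x].
Proof.
move=> hu hu'; have [an [h1 h2 h3 h4]] := approx_wb refl trans approx x.
have [n hn] := hu an x h4 h2 (refl x).
have [m hm] := hu' an x h4 h2 (refl x).
exists (an (maxn n m)); split; last exact: h3.
  by apply: trans hn (incr_mono refl trans h4 (leq_maxl n m)).
by apply: trans hm (incr_mono refl trans h4 (leq_maxr n m)).
Qed.

Lemma wb_ex (M : Type) (le : M -> M -> Prop) (refl : reflP le) (trans : transP le)
  (approx : approxP le) x : exists w, way_below le w x.
Proof. by have [an [_ _ h3 _]] := approx_wb refl trans approx x; exists (an 0%N). Qed.

Lemma riesz2 (M : Type) (le : M -> M -> Prop) (trans : transP le)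
  (Hint : interpolation le) (l1 l2 u0 : M) (Us : list M) :
  le l1 u0 -> le l2 u0 -> (forall u, List.In u Us -> le l1 u /\ le l2 u) ->
  exists c, [/\ le l1 c, le l2 c, le c u0 & forall u, List.In u Us -> le c u].
Proof.
elim: Us => [|u Us IH] h1 h2 hU.
  by have [c [? ? ? ?]] := Hint l1 l2 u0 u0 h1 h1 h2 h2; exists c; split.
have [c' [c1 c2 c3 c4]] := IH h1 h2 (fun u' hu' => hU u' (or_intror hu')).
have [hl1 hl2] := hU u (or_introl erefl).
have [c [d1 d2 d3 d4]] := Hint l1 l2 u c' hl1 c1 hl2 c2.
exists c; split => //; first exact: trans d4 c3.
by move=> u' [<-|hu'] //; exact: trans d4 (c4 _ hu').
Qed.

Lemma rieszL (M : Type) (le : M -> M -> Prop) (refl : reflP le) (trans : transP le)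
  (Hint : interpolation le) (l0 u0 : M) (Ls Us : list M) :
  (forall l u, (l = l0 \/ List.In l Ls) -> (u = u0 \/ List.In u Us) -> le l u) ->
  exists c, (forall l, l = l0 \/ List.In l Ls -> le l c) /\
            (forall u, u = u0 \/ List.In u Us -> le c u).
Proof.
elim: Ls => [|l Ls IH] H.
  exists l0; split; first by move=> l [->|[]]; apply: refl.
  by move=> u hu; apply: H => //; left.
have [c' [c1 c2]] := IH (fun l' u hl hu => H l' u
   (match hl with or_introl e => or_introl e | or_intror i => or_intror (or_intror i) end) hu).
have [c [d1 d2 d3 d4]] := riesz2 trans Hint (l1:=l) (l2:=c') (u0:=u0) (Us:=Us)
  (H _ _ (or_intror (or_introl erefl)) (or_introl erefl)) (c2 _ (or_introl erefl))
  (fun u hu => conj (H _ _ (or_intror (or_introl erefl)) (or_intror hu)) (c2 _ (or_intror hu))).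
exists c; split.
  move=> l' [e|[e|i]]; [|by rewrite -e|].
    by apply: trans (c1 _ (or_introl e)) d2.
  by apply: trans (c1 _ (or_intror i)) d2.
by move=> u [->|hu] //; exact: d4.
Qed.

Record quad (M : Type) := Quad { qa1 : M; qa2 : M; qb1 : M; qb2 : M }.

Definition qle (M : Type) (le : M -> M -> Prop) (D D' : quad M) :=
  [/\ le (qa1 D) (qa1 D'), le (qa2 D) (qa2 D'), le (qb1 D) (qb1 D') & le (qb2 D) (qb2 D')].
Definition qok (M : Type) (le : M -> M -> Prop) (D : quad M) :=
  [/\ le (qa1 D) (qb1 D), le (qa1 D) (qb2 D), le (qa2 D) (qb1 D) & le (qa2 D) (qb2 D)].
Definition inI (M : Type) (le : M -> M -> Prop) (D : quad M) x :=
  [/\ le (qa1 D) x, le (qa2 D) x, le x (qb1 D) & le x (qb2 D)].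
Definition Vq (M : Type) (le : M -> M -> Prop) (B : nat -> option M) (q : nat) (D : quad M) :=
  qok le D /\ exists n1 n2 n3 n4 : nat,
    [/\ @unpickle (nat * nat * nat * nat)%type q = Some (n1, n2, n3, n4),
        B n1 = Some (qa1 D), B n2 = Some (qa2 D), B n3 = Some (qb1 D) & B n4 = Some (qb2 D)].

Lemma Vq_uniq (M : Type) (le : M -> M -> Prop) B q D D' :
  Vq le B q D -> Vq le B q D' -> D = D'.
Proof.
case: D D' => [a1 a2 b1 b2] [a1' a2' b1' b2'] /= [_ [n1 [n2 [n3 [n4 [e h1 h2 h3 h4]]]]]].
move=> [_ [m1 [m2 [m3 [m4 [e' k1 k2 k3 k4]]]]]].
rewrite e in e'; case: e' => e1 e2 e3 e4; subst.
rewrite h1 in k1; rewrite h2 in k2; rewrite h3 in k3; rewrite h4 in k4.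
by case: k1 => ->; case: k2 => ->; case: k3 => ->; case: k4 => ->.
Qed.

Lemma qle_trans (M : Type) (le : M -> M -> Prop) (trans : transP le) D1 D2 D3 :
  qle le D1 D2 -> qle le D2 D3 -> qle le D1 D3.
Proof.
by case=> h1 h2 h3 h4 [k1 k2 k3 k4]; split; [apply: trans h1 k1|apply: trans h2 k2|
  apply: trans h3 k3|apply: trans h4 k4].
Qed.

Definition good (M : Type) (le : M -> M -> Prop) B (c : nat -> M) n :=
  (forall k D, (k < n)%N -> Vq le B k D -> inI le D (c k)) /\
  (forall k l D D', (k < n)%N -> (l < n)%N -> Vq le B k D -> Vq le B l D' ->
     qle le D D' -> le (c k) (c l)).

Lemma listP (M : Type) (P : nat -> Prop) (c : nat -> M) n :
  exists Ls : list M, forall x, List.In x Ls <-> exists k, [/\ (k < n)%N, P k & x = c k].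
Proof.
elim: n => [|n [Ls IH]].
  by exists nil => x; split => //= -[k [] //].
case: (pselect (P n)) => Pn.
  exists (c n :: Ls) => x /=; split.
    case=> [<-|/IH [k [hk Pk ->]]]; first by exists n.
    by exists k; split => //; apply: ltnW.
  case=> k [hk Pk ->]; move: hk; rewrite ltnS leq_eqVlt => /orP [/eqP ->|hk].
    by left.
  by right; apply/IH; exists k.
exists Ls => x; split.
  by move/IH => [k [hk Pk ->]]; exists k; split => //; apply: ltnW.
case=> k [hk Pk ->]; move: hk; rewrite ltnS leq_eqVlt => /orP [/eqP ek|hk].
  by subst k.
by apply/IH; exists k.
Qed.

Lemma ltS_cases k n : (k < n.+1)%N -> k = n \/ (k < n)%N.
Proof. by rewrite ltnS leq_eqVlt => /orP [/eqP ->|]; auto. Qed.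

Definition upd (M : Type) (c : nat -> M) n x := fun i => if i == n then x else c i.

Lemma good_ext (M : Type) (le : M -> M -> Prop) (refl : reflP le) (trans : transP le)
  (Hint : interpolation le) B (c : nat -> M) n :
  good le B c n -> exists x, good le B (upd c n x) n.+1.
Proof.
move=> [g1 g2].
have oldk k : (k < n)%N -> forall x, upd c n x k = c k.
  by move=> hk x; rewrite /upd (ltn_eqF hk).
have newk x : upd c n x n = x by rewrite /upd eqxx.
case: (pselect (exists D, Vq le B n D)) => [[D VD]|noD]; last first.
  exists (c n); split.
    move=> k D /ltS_cases [->|hk] VD.
      by case: noD; exists D.
    by rewrite oldk //; apply: g1.
  move=> k l D D' /ltS_cases [ek|hk].
    by subst k => _ VD _ _; case: noD; exists D.
  move=> /ltS_cases [el|hl]; first by subst l => _ VD'; case: noD; exists D'.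
  by rewrite !oldk //; apply: g2.
have [Ls HL] := listP (fun k => exists Dk, Vq le B k Dk /\ qle le Dk D) c n.
have [Us HU] := listP (fun k => exists Dk, Vq le B k Dk /\ qle le D Dk) c n.
have [okD1 okD2 okD3 okD4] := VD.1.
have Hlu : forall l u, (l = qa1 D \/ List.In l (qa2 D :: Ls)) ->
    (u = qb1 D \/ List.In u (qb2 D :: Us)) -> le l u.
  move=> l u hl hu.
  have Hup : forall l', (l' = qa1 D \/ l' = qa2 D) -> le l' u.
    move=> l' hl'; case: hu => [->|[<-|/HU [k [hk [Dk [VDk qk]]] ->]]].
    - by case: hl' => ->.
    - by case: hl' => ->.
    have [i1 i2 _ _] := g1 k Dk hk VDk; case: qk => q1 q2 _ _.
    by case: hl' => ->; [apply: trans q1 i1|apply: trans q2 i2].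
  case: hl => [->|[<-|/HL [k [hk [Dk [VDk qk]]] ->]]]; try by apply: Hup; auto.
  have [_ _ i3 i4] := g1 k Dk hk VDk; have [_ _ q3 q4] := qk.
  case: hu => [->|[<-|/HU [l' [hl' [Dl [VDl ql]]] ->]]].
  - exact: trans i3 q3.
  - exact: trans i4 q4.
  by apply: g2 hk hl' VDk VDl (qle_trans trans qk ql).
have [x [hx1 hx2]] := rieszL refl trans Hint Hlu.
exists x; split.
  move=> k D' /ltS_cases [->|hk] VD'.
    rewrite newk -(Vq_uniq VD VD'); split.
    - by apply: hx1; left.
    - by apply: hx1; right; left.
    - by apply: hx2; left.
    - by apply: hx2; right; left.
  by rewrite oldk //; apply: g1.
move=> k l D1 D2 /ltS_cases [ek|hk] /ltS_cases [el|hl] V1 V2 q12.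
- by subst k l; rewrite newk; apply: refl.
- subst k; rewrite newk oldk //; apply: hx2; right; right; apply/HU.
  by exists l; split => //; exists D2; split => //; rewrite (Vq_uniq VD V1).
- subst l; rewrite newk oldk //; apply: hx1; right; right; apply/HL.
  by exists k; split => //; exists D1; split => //; rewrite (Vq_uniq VD V2).
- by rewrite !oldk //; apply: g2 hk hl V1 V2 q12.
Qed.

Lemma select (M : Type) (le : M -> M -> Prop) (refl : reflP le) (trans : transP le)
  (Hint : interpolation le) B (m0 : M) : exists c : nat -> M,
  (forall k D, Vq le B k D -> inI le D (c k)) /\
  (forall k l D D', Vq le B k D -> Vq le B l D' -> qle le D D' -> le (c k) (c l)).
Proof.
have : forall p : (nat -> M) * nat, exists x,
    good le B p.1 p.2 -> good le B (upd p.1 p.2 x) p.2.+1.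
  move=> [c n]; case: (pselect (good le B c n)) => g.
    by have [x hx] := good_ext refl trans Hint g; exists x.
  by exists m0.
move=> /choice [f hf].
pose cs := fix cs n := if n is k.+1 then upd (cs k) k (f (cs k, k)) else (fun _ => m0).
have gd : forall n, good le B (cs n) n.
  elim => [|n IH]; first by split => k //.
  exact: (hf (cs n, n) IH).
have st : forall m k, (k < m)%N -> cs m k = cs k.+1 k.
  elim => [|m IH] k // hk.
  case: (ltS_cases hk) => [->|hk'] //.
  rewrite /= /upd (ltn_eqF hk'); exact: IH.
exists (fun k => cs k.+1 k); split.
  by move=> k D VD; have [g1 _] := gd k.+1; exact: g1 k D (ltnSn k) VD.
move=> k l D D' V1 V2 q.
have hk : (k < (maxn k l).+1)%N by rewrite ltnS leq_maxl.
have hl : (l < (maxn k l).+1)%N by rewrite ltnS leq_maxr.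
have [_ g2] := gd (maxn k l).+1.
rewrite -(st _ k hk) -(st _ l hl); exact: g2 hk hl V1 V2 q.
Qed.

Definition wbq (M : Type) (le : M -> M -> Prop) (D X : quad M) :=
  [/\ way_below le (qa1 D) (qa1 X), way_below le (qa2 D) (qa2 X),
      way_below le (qb1 D) (qb1 X) & way_below le (qb2 D) (qb2 X)].

Lemma mkS (M : Type) (le : M -> M -> Prop) (refl : reflP le) (trans : transP le)
  (approx : approxP le) (B : nat -> option M)
  (hB : forall a' a, way_below le a' a ->
      exists n b, B n = Some b /\ le a' b /\ way_below le b a)
  X (okX : qok le X) w1 w2 v1 v2 :
  way_below le w1 (qa1 X) -> way_below le w2 (qa2 X) ->
  way_below le v1 (qb1 X) -> way_below le v2 (qb2 X) ->
  exists q D, [/\ Vq le B q D, wbq le D X, le w1 (qa1 D), le w2 (qa2 D) &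
                  le v1 (qb1 D) /\ le v2 (qb2 D)].
Proof.
move=> h1 h2 h3 h4; case: okX => o11 o12 o21 o22.
have [n1 [a1 [e1 [la1 wa1]]]] := hB _ _ h1.
have [n2 [a2 [e2 [la2 wa2]]]] := hB _ _ h2.
have [u [lu1 lu2 wu]] := wb_dir refl trans approx h3 (wb_le trans wa1 o11).
have [u' [lu'1 lu'2 wu']] := wb_dir refl trans approx wu (wb_le trans wa2 o21).
have [n3 [b1 [e3 [lb1 wb1]]]] := hB _ _ wu'.
have [v [lv1 lv2 wv]] := wb_dir refl trans approx h4 (wb_le trans wa1 o12).
have [v' [lv'1 lv'2 wv']] := wb_dir refl trans approx wv (wb_le trans wa2 o22).
have [n4 [b2 [e4 [lb2 wb2]]]] := hB _ _ wv'.
exists (pickle (n1, n2, n3, n4)), (Quad a1 a2 b1 b2); split => //=.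
- split; last by exists n1, n2, n3, n4; rewrite pickleK.
  split => /=.
  + exact: trans lu2 (trans _ _ _ lu'1 lb1).
  + exact: trans lv2 (trans _ _ _ lv'1 lb2).
  + exact: trans lu'2 lb1.
  + exact: trans lv'2 lb2.
- by split; [apply: trans lu1 (trans _ _ _ lu'1 lb1)|apply: trans lv1 (trans _ _ _ lv'1 lb2)].
Qed.

Lemma Hspec (M : Type) (le : M -> M -> Prop) (refl : reflP le) (trans : transP le)
  (approx : approxP le)
  (sups : forall b, incr_seq le b -> exists s, is_sup le b s)
  (B : nat -> option M)
  (hB : forall a' a, way_below le a' a ->
      exists n b, B n = Some b /\ le a' b /\ way_below le b a)
  (c : nat -> M)
  (hc1 : forall k D, Vq le B k D -> inI le D (c k))
  (hc2 : forall k l D D', Vq le B k D -> Vq le B l D' -> qle le D D' -> le (c k) (c l))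
  X (okX : qok le X) :
  exists H, [/\ inI le X H,
   (forall q D, Vq le B q D -> wbq le D X -> le (c q) H) &
   (forall a, way_below le a H -> exists q D, [/\ Vq le B q D, wbq le D X & le a (c q)])].
Proof.
pose Sx q := exists D, Vq le B q D /\ wbq le D X.
pose rel q q' := forall D D', Vq le B q D -> Vq le B q' D' -> qle le D D'.
have dirS : forall q1 q2, Sx q1 -> Sx q2 -> exists q3, [/\ Sx q3, rel q1 q3 & rel q2 q3].
  move=> q1 q2 [D1 [V1 [w11 w12 w13 w14]]] [D2 [V2 [w21 w22 w23 w24]]].
  have [z1 [z11 z12 z1w]] := wb_dir refl trans approx w11 w21.
  have [z2 [z21 z22 z2w]] := wb_dir refl trans approx w12 w22.
  have [z3 [z31 z32 z3w]] := wb_dir refl trans approx w13 w23.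
  have [z4 [z41 z42 z4w]] := wb_dir refl trans approx w14 w24.
  have [q3 [D3 [V3 W3 l1 l2 [l3 l4]]]] := mkS refl trans approx hB okX z1w z2w z3w z4w.
  exists q3; split; first by exists D3.
    move=> D D' VD VD'; rewrite (Vq_uniq VD V1) (Vq_uniq VD' V3); split.
    - exact: trans z11 l1.
    - exact: trans z21 l2.
    - exact: trans z31 l3.
    - exact: trans z41 l4.
  move=> D D' VD VD'; rewrite (Vq_uniq VD V2) (Vq_uniq VD' V3); split.
  - exact: trans z12 l1.
  - exact: trans z22 l2.
  - exact: trans z32 l3.
  - exact: trans z42 l4.
have [q0 S0] : exists q0, Sx q0.
  have [w1 h1] := wb_ex refl trans approx (qa1 X).
  have [w2 h2] := wb_ex refl trans approx (qa2 X).
  have [w3 h3] := wb_ex refl trans approx (qb1 X).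
  have [w4 h4] := wb_ex refl trans approx (qb2 X).
  have [q [D [V W _ _ _]]] := mkS refl trans approx hB okX h1 h2 h3 h4.
  by exists q, D.
have : forall p : nat * nat, exists q, Sx p.1 -> Sx p.2 -> [/\ Sx q, rel p.1 q & rel p.2 q].
  move=> [q1 q2]; case: (pselect (Sx q1 /\ Sx q2)) => [[s1 s2]|ns].
    by have [q3 h] := dirS q1 q2 s1 s2; exists q3 => _ _.
  by exists 0%N => s1 s2; case: ns; split.
move=> /choice [up hup].
pose qs := fix qs n := if n is k.+1 then
   (if pselect (Sx k) then up (qs k, k) else up (qs k, qs k)) else q0.
have qs_S : forall k, qs k.+1 =
    (if pselect (Sx k) then up (qs k, k) else up (qs k, qs k)) by [].
have relstep : forall k, Sx (qs k) -> Sx (qs k.+1) /\ rel (qs k) (qs k.+1).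
  move=> k IH; rewrite (qs_S k); case: pselect => s.
    by have [] := hup (qs k, k) IH s.
  by have [] := hup (qs k, qs k) IH IH.
have Sqs0 : forall n, Sx (qs n).
  by elim => [|n IH] //; exact: (relstep n IH).1.
have Sqs : forall n, Sx (qs n) /\ rel (qs n) (qs n.+1).
  by move=> n; split; [exact: Sqs0|exact: (relstep n (Sqs0 n)).2].
have cof : forall k, Sx k -> rel k (qs k.+1).
  move=> k s; rewrite (qs_S k); case: pselect => // s'.
  by have [] := hup (qs k, k) (Sqs0 k) s'.
pose z n := c (qs n).
have zincr : incr_seq le z.
  move=> n; have [[D [V _]] r] := Sqs n; have [[D' [V' _]] _] := Sqs n.+1.
  exact: hc2 V V' (r _ _ V V').
have [H hH] := sups z zincr.
have P1 : forall q D, Vq le B q D -> wbq le D X -> le (c q) H.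
  move=> q D V W; have Sq : Sx q by exists D.
  have [[D' [V' _]] _] := Sqs q.+1.
  apply: trans (hc2 _ _ _ _ V V' (cof q Sq D D' V V')) _.
  by case: hH => hH1 _; exact: hH1 q.+1.
exists H; split => //; last first.
  move=> a ha; have [n hn] := ha z H zincr hH (refl H).
  by have [[D [V W]] _] := Sqs n; exists (qs n), D.
have ub : forall n, exists D, Vq le B (qs n) D /\ wbq le D X.
  by move=> n; exact: (Sqs n).1.
case: hH => hH1 hH2; split.
- have [an [_ asup awb _]] := approx_wb refl trans approx (qa1 X).
  case: asup => _ asup; apply: asup => m.
  have [w2 h2] := wb_ex refl trans approx (qa2 X).
  have [w3 h3] := wb_ex refl trans approx (qb1 X).
  have [w4 h4] := wb_ex refl trans approx (qb2 X).
  have [q [D [V W l1 _ _]]] := mkS refl trans approx hB okX (awb m) h2 h3 h4.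
  have [i1 _ _ _] := hc1 _ _ V.
  exact: trans l1 (trans _ _ _ i1 (P1 q D V W)).
- have [an [_ asup awb _]] := approx_wb refl trans approx (qa2 X).
  case: asup => _ asup; apply: asup => m.
  have [w1 h1] := wb_ex refl trans approx (qa1 X).
  have [w3 h3] := wb_ex refl trans approx (qb1 X).
  have [w4 h4] := wb_ex refl trans approx (qb2 X).
  have [q [D [V W _ l2 _]]] := mkS refl trans approx hB okX h1 (awb m) h3 h4.
  have [_ i2 _ _] := hc1 _ _ V.
  exact: trans l2 (trans _ _ _ i2 (P1 q D V W)).
- apply: hH2 => n; have [D [V [_ _ W3 _]]] := ub n.
  have [_ _ i3 _] := hc1 _ _ V.
  exact: trans i3 (wbW refl W3).
- apply: hH2 => n; have [D [V [_ _ _ W4]]] := ub n.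
  have [_ _ _ i4] := hc1 _ _ V.
  exact: trans i4 (wbW refl W4).
Qed.

Theorem proposition3p5 (M : Type) (add : M -> M -> M) (le : M -> M -> Prop)
  (HCu : is_Cu add le) (Hcb : countably_based le) (Hint : interpolation le)
  (R : realType) (X : pseudoMetricType R)
  (Hmet : hausdorff_space X) (Hcpt : compact [set: X])
  (Hdim : finite_dimensional X) :
  lsc_interpolation X le.
Proof.
case: HCu => [[[refl _ trans] _] sups approx _ _].
case: Hcb => B hB.
move=> f1 f2 g1 g2 lf1 lf2 lg1 lg2 h11 h12 h21 h22.
case: (pselect (exists t : X, True)) => [[t0 _]|nX]; last first.
  by exists f1; split => // t; case: nX; exists t.
have [c [hc1 hc2]] := select refl trans Hint B (f1 t0).
have : forall Y : quad M, exists H, qok le Y -> [/\ inI le Y H,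
   (forall q D, Vq le B q D -> wbq le D Y -> le (c q) H) &
   (forall a, way_below le a H -> exists q D, [/\ Vq le B q D, wbq le D Y & le a (c q)])].
  move=> Y; case: (pselect (qok le Y)) => ok; last by exists (qa1 Y).
  by have [H hH] := Hspec refl trans approx sups hB hc1 hc2 ok; exists H.
move=> /choice [Hf hHf].
pose dat t := Quad (f1 t) (f2 t) (g1 t) (g2 t).
have okd t : qok le (dat t) by split; [exact: h11|exact: h12|exact: h21|exact: h22].
exists (fun t => Hf (dat t)); split; last first.
  by move=> t; have [[i1 i2 i3 i4] _ _] := hHf _ (okd t); split.
move=> a; rewrite openE => t /= hat.
have [_ _ P2] := hHf _ (okd t).
have [a' [haa' ha't]] := wb_interp refl trans approx hat.
have [q [D [V W la]]] := P2 a' ha't.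
case: W => w1 w2 w3 w4.
pose U := [set s | way_below le (qa1 D) (f1 s)] `&` [set s | way_below le (qa2 D) (f2 s)]
  `&` [set s | way_below le (qb1 D) (g1 s)] `&` [set s | way_below le (qb2 D) (g2 s)].
have oU : open U by repeat apply: openI.
rewrite /interior nbhsE; exists U; first by split.
move=> s [[[u1 u2] u3] u4] /=.
have [_ P1s _] := hHf _ (okd s).
have := wb_le trans haa' (trans _ _ _ la (P1s q D V (And4 u1 u2 u3 u4))). exact.
Qed.
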